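(* The tropicalization $\operatorname{trop}(\mathrm{PM}^+_n(\mathbb{R}))\subseteq\mathbb{R}^{2^{[n]}}$ of the image of the cone of $n\times n$ real symmetric positive definite matrices under the principal minor map is contained in the set of $M^\natural$-concave functions $2^{[n]}\to\mathbb{R}$.
   Context: $\mathrm{PM}^+_n(\mathbb{R})=\{(A_S)_{S\subseteq[n]} : A \text{ real symmetric positive definite } n\times n\}\subseteq\mathbb{R}_{+}^{2^{[n]}}$, where $A_S$ is the principal minor on rows/columns $S$ ($A_\emptyset=1$). For $\mathcal{S}\subseteq\mathbb{R}_+^N$, $\operatorname{trop}(\mathcal{S})=\lim_{t\to\infty}\{(\log_t x_1,\dots,\log_t x_N): x\in\mathcal{S}\}$ (logarithmic limit set). Vectors in $\mathbb{R}^{2^{[n]}}$ are regarded as functions $F:2^{[n]}\to\mathbb{R}$. $F$ is $M^\natural$-concave if for all $S,T\subseteq[n]$ and all $i\in S\setminus T$, either $F(S)+F(T)\le F(S\setminus\{i\})+F(T\cup\{i\})$, or there exists $j\in T\setminus S$ with $F(S)+F(T)\le F((S\setminus\{i\})\cup\{j\})+F((T\setminus\{j\})\cup\{i\})$. *)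

(* Defs.v *)
From HB Require Import structures.
From mathcomp Require Import all_boot all_order all_algebra.
From mathcomp Require Import all_classical all_reals all_analysis.
Set Implicit Arguments. Unset Strict Implicit. Unset Printing Implicit Defensive.
Import Order.TTheory GRing.Theory Num.Theory numFieldNormedType.Exports.
Local Open Scope ring_scope.
Local Open Scope classical_set_scope.

Definition posdef (R : realType) (n : nat) (A : 'M[R]_n) : Prop :=
  A^T = A /\ forall x : 'rV[R]_n, x != 0 -> 0 < (x *m A *m x^T) 0 0.

Definition principal_submx (R : realType) (n : nat) (A : 'M[R]_n) (S : {set 'I_n})
  : 'M[R]_#|S| := \matrix_(i < #|S|, j < #|S|) A (enum_val i) (enum_val j).

(* Principal minor A_S; A_emptyset = det of the 0x0 matrix = 1. *)
Definition principal_minor (R : realType) (n : nat) (A : 'M[R]_n) (S : {set 'I_n}) : R :=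
  \det (principal_submx A S).

Definition PMplus (R : realType) (n : nat) : set ({set 'I_n} -> R) :=
  [set F | exists A : 'M[R]_n, posdef A /\ F = principal_minor A].

Definition logb (R : realType) (t x : R) : R := ln x / ln t.

(* Logarithmic limit set of S (a subset of the positive orthant indexed by a
   finite type I): the (upper Kuratowski) limit of log_t(S) as t -> +oo, i.e.
   points y such that y = lim_k log_{t_k}(x_k) for some x_k in S, t_k -> +oo. *)
Definition trop (R : realType) (I : finType) (S : set (I -> R)) : set (I -> R) :=
  [set y : I -> R | exists (t : R^nat) (x : nat -> I -> R),
      (t @ \oo --> +oo%R) /\ (forall k, S (x k)) /\
      (forall i : I, ((fun k => logb (t k) (x k i)) : R^nat) @ \oo --> (y i : R))].

Definition Mnat_concave (R : realType) (n : nat) (F : {set 'I_n} -> R) : Prop :=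
  forall (S T : {set 'I_n}) (i : 'I_n), i \in S :\: T ->
    (F S + F T <= F (S :\ i) + F (i |: T)) \/
    (exists2 j : 'I_n, j \in T :\: S &
       F S + F T <= F (j |: (S :\ i)) + F (i |: (T :\ j))).

(* Main.v *)
Require Import Defs.
From HB Require Import structures.
From mathcomp Require Import all_boot all_order all_algebra all_fingroup.
From mathcomp Require Import all_classical all_reals all_analysis.
From mathcomp Require Import ring lra.
Import Order.TTheory GRing.Theory Num.Theory numFieldNormedType.Exports.
Set Implicit Arguments. Unset Strict Implicit. Unset Printing Implicit Defensive.
Local Open Scope ring_scope.

Definition ind (R : realFieldType) n (X : {set 'I_n}) : 'rV[R]_n := \row_a ((a \in X)%:R).
Definition Pm (R : realFieldType) n (X : {set 'I_n}) : 'M[R]_n := diag_mx (ind R X).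
Definition MX (R : realFieldType) n (A : 'M[R]_n) X :=
  Pm R X *m A *m Pm R X + (1%:M - Pm R X).

Lemma MXE (R : realFieldType) n (A : 'M[R]_n) X a b :
  MX A X a b = if (a \in X) && (b \in X) then A a b else (a == b)%:R.
Proof.
rewrite /MX /Pm mul_mx_diag mul_diag_mx !mxE.
case: (eqVneq a b) => [->|nab]; case aX: (a \in X); case bX: (b \in X) => /=;
  rewrite ?mulr1 ?mulr0 ?mul1r ?mul0r ?subr0 ?subrr ?add0r ?addr0 //;
  by rewrite ?eqxx ?(negPf nab) ?aX ?bX /= ?mulr1n ?mulr0n ?subr0 ?subrr ?addr0 ?add0r.
Qed.

Lemma det_mxsub_perm (R : comPzRingType) m n (e : m = n) (h : 'I_m -> 'I_n)
  (hi : injective h) (M : 'M[R]_n) : \det (mxsub h h M) = \det M.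
Proof.
case: n / e h hi M => h hi M.
pose s := perm hi.
have -> : mxsub h h M = row_perm s (col_perm s M).
  by apply/matrixP => a b; rewrite !mxE !permE.
rewrite row_permE col_permE !det_mulmx !det_perm odd_permV.
by rewrite mulrCA -expr2 sqrr_sign mulr1.
Qed.

Lemma pm_MX (R : realType) n (A : 'M[R]_n) X :
  principal_minor A X = \det (MX A X).
Proof.
have e : (#|X| + #|~: X|)%N = n by rewrite finset.cardsC card_ord.
pose h (u : 'I_(#|X| + #|~: X|)) : 'I_n :=
  match fintype.split u with inl a => enum_val a | inr b => enum_val b end.
have hi : injective h.
  move=> u v; rewrite -(splitK u) -(splitK v) /h !unsplitK.
  case: (fintype.split u) => a; case: (fintype.split v) => b /=.
  - by move/enum_val_inj => ->.
  - by move=> E; have := enum_valP a; have := enum_valP b; rewrite -E => /finset.setCP.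
  - by move=> E; have := enum_valP a; have := enum_valP b; rewrite -E => H /finset.setCP.
  - by move/enum_val_inj => ->.
rewrite -(det_mxsub_perm e hi).
have -> : mxsub h h (MX A X) = block_mx (principal_submx A X) 0 0 1%:M.
  apply/matrixP => u v; rewrite -(splitK u) -(splitK v) mxE MXE /h !unsplitK.
  case: (fintype.split u) => a; case: (fintype.split v) => b /=.
  - rewrite block_mxEul mxE.
    have Ha : enum_val a \in X := enum_valP a.
    have Hb : enum_val b \in X := enum_valP b.
    by rewrite Ha Hb.
  - rewrite block_mxEur mxE.
    have Ha : enum_val a \in X := enum_valP a.
    have Hb : enum_val b \notin X by apply/negP/finset.setCP; exact: enum_valP b.
    rewrite (negPf Hb) andbF; case: eqP => // E; by rewrite E (negPf Hb) in Ha.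
  - rewrite block_mxEdl mxE.
    have Hb : enum_val b \in X := enum_valP b.
    have Ha : enum_val a \notin X by apply/negP/finset.setCP; exact: enum_valP a.
    rewrite (negPf Ha) /=; case: eqP => // E; by rewrite E Hb in Ha.
  - rewrite block_mxEdr mxE (inj_eq enum_val_inj).
    have Ha : enum_val a \notin X by apply/negP/finset.setCP; exact: enum_valP a.
    by rewrite (negPf Ha).
by rewrite det_ublock det1 mulr1.
Qed.

Lemma colmul_entry (R : realFieldType) n (i : 'I_n) (w : 'rV[R]_n) a b :
  (delta_mx i 0 *m w) a b = (a == i)%:R * w 0 b.
Proof. by rewrite !mxE big_ord1 !mxE eqxx andbT. Qed.

Lemma row_e_col (R : realFieldType) n (i : 'I_n) (v : 'rV[R]_n) (M : 'M[R]_(1, n)):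
  v *m delta_mx i 0 *m M = v 0 i *: M.
Proof.
rewrite -colE [col i v]mx11_scalar mul_scalar_mx !mxE //.
Qed.

Lemma det_rank1 (R : realFieldType) n (i : 'I_n) (w : 'rV[R]_n) :
  w 0 i = 0 -> \det (1%:M + delta_mx i 0 *m w) = 1.
Proof.
move=> wi.
pose C : 'M[R]_n := 1%:M + delta_mx i 0 *m (w - 'e_i).
have -> : \det (1%:M + delta_mx i 0 *m w) = 1 * \det (1%:M : 'M[R]_n) + 1 * \det C.
  apply: (determinant_multilinear (i0 := i)).
  - have e1 : 'e_i *m delta_mx i 0 = 1%:M :> 'M[R]_1.
      by rewrite mul_delta_mx; apply/matrixP => a b; rewrite !ord1 !mxE.
    rewrite !scale1r /C !rowE !mulmxDr !mulmx1 !mulmxA e1 !mul1mx.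
    by congr (_ + _); rewrite addrC subrK.
  - apply/matrixP => a b; rewrite !mxE !big_ord1 !mxE.
    have -> : (lift i a == i) = false by rewrite eq_sym (negPf (neq_lift _ _)).
    by rewrite mul0r addr0.
  - apply/matrixP => a b; rewrite !mxE !big_ord1 !mxE.
    have -> : (lift i a == i) = false by rewrite eq_sym (negPf (neq_lift _ _)).
    by rewrite !mul0r.
have -> : \det C = 0.
  apply/eqP/det0P; exists ('e_i - w).
    apply/eqP => /matrixP /(_ 0 i); rewrite !mxE wi eqxx /= subr0 => /eqP.
    by rewrite eqxx oner_eq0.
  rewrite /C mulmxDr mulmx1 mulmxA row_e_col !mxE eqxx wi /= subr0.
  by rewrite eqxx scale1r addrA subrK subrr.
by rewrite mulr0 addr0 mul1r det_scalar expr1n.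
Qed.

Lemma Pm_entry (R : realFieldType) n (X : {set 'I_n}) a b :
  Pm R X a b = ((a \in X) && (a == b))%:R.
Proof. by rewrite /Pm !mxE; case: (a \in X); case: (a == b). Qed.

Lemma P2 (R : realFieldType) n (A : 'M[R]_n) (sA : A^T = A) (X : {set 'I_n})
  (i : 'I_n) (p : 'rV[R]_n) :
  i \notin X -> (forall a, a \notin X -> p 0 a = 0) ->
  (forall b, b \in X -> (('e_i - p) *m A) 0 b = 0) ->
  \det (MX A (i |: X)) = (('e_i - p) *m A *m ('e_i - p)^T) 0 0 * \det (MX A X).
Proof.
move=> iX hp hy.
set ei : 'rV[R]_n := 'e_i. set y := ei - p.
set P := Pm R X. set P' := Pm R (i |: X).
set dl : 'M[R]_(n, 1) := delta_mx i 0.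
have tdl : dl^T = ei by rewrite trmx_delta.
have tei : ei^T = dl by rewrite trmx_delta.
set D := dl *m ei.
have F1 : P' = P + D.
  apply/matrixP => a b; rewrite [(P + D) a b]mxE !Pm_entry colmul_entry mxE finset.in_setU1 /=.
  case ai: (a == i); case bi: (b == i); rewrite /=.
  - by rewrite (eqP ai) (eqP bi) eqxx (negPf iX) mulr1 add0r.
  - by rewrite (eqP ai) (negPf iX) eq_sym bi /= mulr0 addr0.
  - by rewrite (eqP bi) /= mulr1 addr0.
  - by rewrite mul0r addr0.
have F2 : p *m P = p.
  apply/matrixP => a b; rewrite /P /Pm mul_mx_diag !mxE.
  case bX : (b \in X); first by rewrite mulr1.
  by rewrite mulr0 (ord1 a) hp // bX.
have F3 : ei *m P = 0.
  apply/matrixP => a b; rewrite /P /Pm mul_mx_diag !mxE.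
  case bi: (b == i); first by rewrite (eqP bi) (negPf iX) mulr0.
  by rewrite andbF mul0r.
have F4 : y *m A *m P = 0.
  apply/matrixP => a b; rewrite /P /Pm mul_mx_diag !mxE (ord1 a).
  case bX : (b \in X); last by rewrite mulr0.
  by have := hy b bX; rewrite -/ei -/y !mxE => ->; rewrite mul0r.
have F5 : p *m dl = 0.
  rewrite /dl -colE [col i p]mx11_scalar !mxE hp //.
  by apply/matrixP => a b; rewrite !mxE mul0rn.
have F6 : ei *m dl = 1%:M.
  by rewrite mul_delta_mx; apply/matrixP => a b; rewrite !ord1 !mxE.
have tP : P^T = P by rewrite tr_diag_mx.
have tP' : P'^T = P' by rewrite tr_diag_mx.
set E : 'M[R]_n := 1%:M - dl *m p.
have detE : \det E = 1.
  by rewrite /E -mulmxN det_rank1 // mxE hp // oppr0.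
have pP' : p *m P' = p.
  by rewrite F1 mulmxDr F2 /D mulmxA F5 mul0mx addr0.
have EP' : E *m P' = P + dl *m y.
  rewrite /E mulmxBl mul1mx -mulmxA pP' F1 /D /y mulmxBr.
  by rewrite addrA.
have tr1P' : (1%:M - P')^T = 1%:M - P' by rewrite linearB /= trmx1 tP'.
have E1a : E *m (1%:M - P') = 1%:M - P'.
  by rewrite /E mulmxBl mul1mx -mulmxA mulmxBr mulmx1 pP' subrr mulmx0 subr0.
have E1 : E *m (1%:M - P') *m E^T = 1%:M - P'.
  rewrite E1a -{1}tr1P' -trmx_mul E1a //.
have E2 : E *m (P' *m A *m P') *m E^T = (P + dl *m y) *m A *m (P + dl *m y)^T.
  by rewrite -EP' trmx_mul tP' !mulmxA.
clearbody y.
set Q := (y *m A *m y^T) 0 0.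
have E3 : (P + dl *m y) *m A *m (P + dl *m y)^T = P *m A *m P + Q *: D.
  rewrite [(_ + _)^T]linearD /= trmx_mul tdl tP !mulmxDl !mulmxDr.
  have h1 : P *m A *m (y^T *m ei) = 0.
    rewrite mulmxA -{1}tP -sA -trmx_mul -trmx_mul !mulmxA F4.
    by rewrite trmx0 mul0mx.
  have h2 : dl *m y *m A *m P = 0 by rewrite -!mulmxA (mulmxA y) F4 mulmx0.
  have h3 : dl *m y *m A *m (y^T *m ei) = Q *: D.
    rewrite !mulmxA -(mulmxA dl) -(mulmxA dl) [y *m A *m y^T]mx11_scalar -/Q.
    by rewrite mul_mx_scalar -scalemxAl.
  by rewrite h1 h2 h3 addr0 add0r.
have EME : E *m MX A (i |: X) *m E^T = MX A X + (Q - 1) *: D.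
  rewrite /MX -/P' -/P mulmxDr mulmxDl E2 E1 E3 F1 scalerBl scale1r.
  by rewrite opprD !addrA; congr (_ + _); rewrite (addrAC _ (Q *: D)) (addrAC _ (Q *: D)).
have eMX : ei *m MX A X = ei.
  by rewrite /MX -/P mulmxDr !mulmxA F3 !mul0mx add0r mulmxBr mulmx1 F3 subr0.
have DMX : MX A X + (Q - 1) *: D = (1%:M + (Q - 1) *: D) *m MX A X.
  by rewrite mulmxDl mul1mx -scalemxAl /D -mulmxA eMX.
have detD : \det (1%:M + (Q - 1) *: D) = Q.
  have -> : 1%:M + (Q - 1) *: D = diag_mx (\row_a (1 + (Q - 1) * (a == i)%:R)).
    apply/matrixP => a b; rewrite /D !mxE big_ord1 !mxE !eqxx /= andbT.
    case ab: (a == b).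
      by rewrite (eqP ab) mulr1n; case: (b == i); rewrite /= ?mulr1 ?mulr0.
    rewrite mulr0n add0r; case ai: (a == i); case bi: (b == i); rewrite /= ?mulr0 ?mul0r ?mulr0 ?mulr0n //.
    by rewrite (eqP ai) (eqP bi) eqxx in ab.
  rewrite det_diag (bigD1 i) //= big1 ?mulr1 => [|a ai]; rewrite mxE.
    by rewrite eqxx mulr1 addrC subrK.
  by rewrite (negPf ai) mulr0 addr0.
have := congr1 determinant EME.
rewrite !det_mulmx det_tr detE mul1r mulr1 => ->.
by rewrite DMX det_mulmx detD.
Qed.

Definition Bf (R : realFieldType) n (A : 'M[R]_n) (u v : 'rV[R]_n) : R := (u *m A *m v^T) 0 0.
Definition supp (R : realFieldType) n (X : {set 'I_n}) (u : 'rV[R]_n) :=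
  forall a, a \notin X -> u 0 a = 0.
Definition PD (R : realFieldType) n (A : 'M[R]_n) :=
  A^T = A /\ forall x, x != 0 -> 0 < Bf A x x.
Definition proj (R : realFieldType) n (A : 'M[R]_n) (X : {set 'I_n}) (y : 'rV[R]_n) :=
  y *m A *m Pm R X *m invmx (MX A X).

Lemma BfC (R : realFieldType) n (A : 'M[R]_n) : A^T = A -> forall u v, Bf A u v = Bf A v u.
Proof.
move=> sA u v; rewrite /Bf.
have -> : (u *m A *m v^T) 0 0 = (u *m A *m v^T)^T 0 0 by rewrite [RHS]mxE.
by rewrite !trmx_mul trmxK sA mulmxA.
Qed.

Lemma BfDl (R : realFieldType) n (A : 'M[R]_n) u w v : Bf A (u + w) v = Bf A u v + Bf A w v.
Proof. by rewrite /Bf !mulmxDl mxE. Qed.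
Lemma BfZl (R : realFieldType) n (A : 'M[R]_n) c u v : Bf A (c *: u) v = c * Bf A u v.
Proof. by rewrite /Bf -!scalemxAl mxE. Qed.
Lemma BfNl (R : realFieldType) n (A : 'M[R]_n) u v : Bf A (- u) v = - Bf A u v.
Proof. by rewrite -scaleN1r BfZl mulN1r. Qed.
Lemma BfBl (R : realFieldType) n (A : 'M[R]_n) u w v : Bf A (u - w) v = Bf A u v - Bf A w v.
Proof. by rewrite BfDl BfNl. Qed.
Lemma Bf0l (R : realFieldType) n (A : 'M[R]_n) v : Bf A 0 v = 0.
Proof. by rewrite /Bf !mul0mx mxE. Qed.
Lemma Bf_suml (R : realFieldType) n (A : 'M[R]_n) (I : Type) (r : seq I) (P : pred I)
  (F : I -> 'rV[R]_n) v :
  Bf A (\sum_(j <- r | P j) F j) v = \sum_(j <- r | P j) Bf A (F j) v.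
Proof. by rewrite /Bf !mulmx_suml summxE. Qed.

Lemma BfDr (R : realFieldType) n (A : 'M[R]_n) : A^T = A -> forall u w v,
  Bf A v (u + w) = Bf A v u + Bf A v w.
Proof. by move=> sA u w v; rewrite !(BfC sA v) BfDl. Qed.
Lemma BfZr (R : realFieldType) n (A : 'M[R]_n) : A^T = A -> forall c u v,
  Bf A v (c *: u) = c * Bf A v u.
Proof. by move=> sA c u v; rewrite !(BfC sA v) BfZl. Qed.
Lemma BfBr (R : realFieldType) n (A : 'M[R]_n) : A^T = A -> forall u w v,
  Bf A v (u - w) = Bf A v u - Bf A v w.
Proof. by move=> sA u w v; rewrite !(BfC sA v) BfBl. Qed.

Lemma Qge0 (R : realFieldType) n (A : 'M[R]_n) : PD A -> forall u, 0 <= Bf A u u.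
Proof.
case=> sA pA u; case: (eqVneq u 0) => [->|u0]; first by rewrite Bf0l.
exact/ltW/pA.
Qed.

Lemma Qexp (R : realFieldType) n (A : 'M[R]_n) : A^T = A -> forall u w,
  Bf A (u + w) (u + w) = Bf A u u + 2 * Bf A u w + Bf A w w.
Proof.
move=> sA u w; rewrite BfDl !(BfDr sA) (BfC sA w u); ring.
Qed.

Lemma Qle2 (R : realFieldType) n (A : 'M[R]_n) : PD A -> forall u w,
  Bf A (u + w) (u + w) <= 2 * Bf A u u + 2 * Bf A w w.
Proof.
move=> hA u w; have := Qge0 hA (u - w); have sA := hA.1.
have e1 : Bf A u (-w) = - Bf A u w by rewrite (BfC sA) BfNl (BfC sA).
have e2 : Bf A (-w) (-w) = Bf A w w by rewrite BfNl (BfC sA) BfNl opprK.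
rewrite (Qexp sA u (-w)) e1 e2 (Qexp sA) => h; lra.
Qed.

Lemma QZ (R : realFieldType) n (A : 'M[R]_n) : A^T = A -> forall c u,
  Bf A (c *: u) (c *: u) = c ^+ 2 * Bf A u u.
Proof. by move=> sA c u; rewrite BfZl (BfZr sA) mulrA expr2. Qed.

Lemma Qsum (R : realFieldType) n (A : 'M[R]_n) (hA : PD A) (I : Type) (r : seq I)
  (P : pred I) (F : I -> 'rV[R]_n) :
  Bf A (\sum_(j <- r | P j) F j) (\sum_(j <- r | P j) F j)
  <= 2 ^+ size r * \sum_(j <- r | P j) Bf A (F j) (F j).
Proof.
have S0 : forall r', 0 <= \sum_(j <- r' | P j) Bf A (F j) (F j).
  by move=> r'; apply: sumr_ge0 => j _; apply: Qge0.
elim: r => [|a r IH]; first by rewrite !big_nil Bf0l mulr0.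
rewrite !big_cons /=; have := S0 r; have := Qge0 hA (F a).
have h2 : (2 : R) <= 2 ^+ (size r).+1.
  by rewrite exprS ler_peMr // exprn_ege1 // ler1n.
case: (P a) => h0 h1.
  apply: le_trans (Qle2 hA _ _) _.
  have K1 : 1 <= 2 ^+ size r :> R by rewrite exprn_ege1 // ler1n.
  have hh : 0 <= (2 ^+ size r - 1) * Bf A (F a) (F a) by apply: mulr_ge0 => //; rewrite subr_ge0.
  move: IH h2; rewrite exprS; set K := 2 ^+ size r => IH h2.
  set u := Bf A (F a) (F a) in h0 h1 hh *. set s := \sum_(j <- r | P j) _ in h1 IH *.
  nra.
apply: le_trans IH _.
have hx : 0 <= 2 ^+ size r * \sum_(j <- r | P j) Bf A (F j) (F j) by rewrite mulr_ge0 // exprn_ge0.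
rewrite exprS; lra.
Qed.

Lemma orth (R : realFieldType) n (A : 'M[R]_n) (X : {set 'I_n}) (z w : 'rV[R]_n) :
  (forall b, b \in X -> (z *m A) 0 b = 0) -> supp X w -> Bf A z w = 0.
Proof.
move=> hz hw; rewrite /Bf mxE big1 // => b _; rewrite [w^T _ _]mxE.
case bX : (b \in X); first by rewrite hz // mul0r.
by rewrite hw ?bX // mulr0.
Qed.

Lemma PmK (R : realFieldType) n (X : {set 'I_n}) : Pm R X *m Pm R X = Pm R X.
Proof.
apply/matrixP => a b; rewrite {1}/Pm mul_diag_mx mxE /ind mxE !Pm_entry.
by case: (a \in X); rewrite ?mul1r ?mul0r.
Qed.

Lemma Pm_supp (R : realFieldType) n (X : {set 'I_n}) (u : 'rV[R]_n) :
  supp X u <-> u *m Pm R X = u.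
Proof.
split.
  move=> hu; apply/matrixP => a b; rewrite /Pm mul_mx_diag !mxE (ord1 a).
  by case bX : (b \in X); rewrite ?mulr1 // mulr0 hu ?bX.
move=> <- a aX; rewrite /Pm mul_mx_diag !mxE (negPf aX) mulr0 //.
Qed.

Lemma Pm_tr (R : realFieldType) n (X : {set 'I_n}) : (Pm R X)^T = Pm R X.
Proof. exact: tr_diag_mx. Qed.

Lemma PmC0 (R : realFieldType) n (X : {set 'I_n}) : Pm R X *m (1%:M - Pm R X) = 0.
Proof. by rewrite mulmxBr mulmx1 PmK subrr. Qed.

Lemma MXC (R : realFieldType) n (A : 'M[R]_n) (X : {set 'I_n}) :
  MX A X *m (1%:M - Pm R X) = 1%:M - Pm R X.
Proof.
rewrite /MX mulmxDl -mulmxA PmC0 mulmx0 add0r mulmxBl mul1mx PmC0 subr0 //.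
Qed.

Lemma MX_unit (R : realFieldType) n (A : 'M[R]_n) (X : {set 'I_n}) : PD A -> MX A X \in unitmx.
Proof.
case=> sA pA; rewrite unitmxE unitfE; apply/negP => /det0P [v v0 vM].
have vC : v *m (1%:M - Pm R X) = 0 by rewrite -(MXC A X) mulmxA vM mul0mx.
have vP : v *m Pm R X = v by move: vC; rewrite mulmxBr mulmx1 => /eqP; rewrite subr_eq0 => /eqP.
have vAP : v *m A *m Pm R X = 0.
  by move: vM; rewrite /MX mulmxDr vC addr0 !mulmxA vP.
have := pA v v0; rewrite /Bf -{2}vP trmx_mul Pm_tr mulmxA vAP mul0mx mxE ltxx //.
Qed.

Lemma proj_supp (R : realFieldType) n (A : 'M[R]_n) (X : {set 'I_n}) y : PD A -> supp X (proj A X y).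
Proof.
move=> hA; apply/Pm_supp; set p := proj A X y.
have pM : p *m MX A X = y *m A *m Pm R X by rewrite /p /proj mulmxKV // MX_unit.
have : p *m (1%:M - Pm R X) = 0.
  by rewrite -(MXC A X) mulmxA pM -mulmxA PmC0 mulmx0.
by rewrite mulmxBr mulmx1 => /eqP; rewrite subr_eq0 => /eqP.
Qed.

Lemma proj_orth (R : realFieldType) n (A : 'M[R]_n) (X : {set 'I_n}) y : PD A ->
  forall b, b \in X -> ((y - proj A X y) *m A) 0 b = 0.
Proof.
move=> hA b bX; set p := proj A X y.
have pM : p *m MX A X = y *m A *m Pm R X by rewrite /p /proj mulmxKV // MX_unit.
have pP : p *m Pm R X = p by apply/Pm_supp/proj_supp.
have pC : p *m (1%:M - Pm R X) = 0 by rewrite mulmxBr mulmx1 pP subrr.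
have : (y - p) *m A *m Pm R X = 0.
  by rewrite mulmxBl mulmxBl -pM /MX mulmxDr pC addr0 !mulmxA pP subrr.
move/matrixP => /(_ 0 b); rewrite /Pm mul_mx_diag !mxE bX mulr1 => ->.
by [].
Qed.

Lemma proj_min (R : realFieldType) n (A : 'M[R]_n) (X : {set 'I_n}) y v : PD A -> supp X v ->
  Bf A (y - proj A X y) (y - proj A X y) <= Bf A (y - v) (y - v).
Proof.
move=> hA hv; set p := proj A X y.
have -> : y - v = (y - p) + (p - v) by rewrite addrA subrK.
rewrite [X in _ <= X](Qexp hA.1 (y - p) (p - v)) (@orth _ _ _ X (y - p) (p - v)) ?mulr0 ?addr0.
- by rewrite lerDl Qge0.
- exact: proj_orth.
move=> a aX; have hp := proj_supp y hA aX; rewrite -/p in hp.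
by rewrite [(p - v) 0 a]mxE [(- v) 0 a]mxE hp hv // subrr.
Qed.

Definition pmx (R : realFieldType) n (A : 'M[R]_n) (X : {set 'I_n}) := \det (MX A X).

Lemma P2' (R : realFieldType) n (A : 'M[R]_n) (hA : PD A) (X : {set 'I_n}) i :
  i \notin X -> pmx A (i |: X) =
    Bf A ('e_i - proj A X 'e_i) ('e_i - proj A X 'e_i) * pmx A X.
Proof.
move=> iX; apply: P2 => //; first exact: hA.1.
- exact: proj_supp.
- exact: proj_orth.
Qed.

Lemma Qpos_e (R : realFieldType) n (A : 'M[R]_n) (hA : PD A) (X : {set 'I_n}) i :
  i \notin X -> 0 < Bf A ('e_i - proj A X 'e_i) ('e_i - proj A X 'e_i).
Proof.
move=> iX; apply: hA.2; apply/eqP => /matrixP /(_ 0 i).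
rewrite [('e_i - _) 0 i]mxE [(- proj _ _ _) 0 i]mxE (proj_supp 'e_i hA iX) subr0 mxE !eqxx /= => /eqP.
by rewrite mxE oner_eq0.
Qed.

Lemma pmx0 (R : realFieldType) n (A : 'M[R]_n) : pmx A finset.set0 = 1.
Proof.
rewrite /pmx /MX.
have -> : Pm R (finset.set0 : {set 'I_n}) = 0 by apply/matrixP => a b; rewrite Pm_entry inE mxE.
by rewrite mulmx0 add0r subr0 det1.
Qed.

Lemma pmx_pos (R : realFieldType) n (A : 'M[R]_n) (hA : PD A) (X : {set 'I_n}) : 0 < pmx A X.
Proof.
move: {2}#|X| (erefl #|X|) => k; elim: k X => [|k IH] X hX.
  by move: hX => /eqP; rewrite finset.cards_eq0 => /eqP ->; rewrite pmx0 ltr01.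
have : (0 < #|X|)%N by rewrite hX.
case/card_gt0P => i iX.
rewrite -(finset.setD1K iX) P2' ?finset.setD11 //.
apply: mulr_gt0; first by apply: (Qpos_e hA); rewrite finset.setD11.
by apply: IH; move: hX; rewrite (finset.cardsD1 i X) iX add1n => -[].
Qed.

Lemma rvB (R : realFieldType) n (x y : 'rV[R]_n) a : (x - y) 0 a = x 0 a - y 0 a.
Proof. by rewrite !mxE. Qed.
Lemma rvZ (R : realFieldType) n c (x : 'rV[R]_n) a : (c *: x) 0 a = c * x 0 a.
Proof. by rewrite !mxE. Qed.
Lemma rve (R : realFieldType) n (j a : 'I_n) : ('e_j : 'rV[R]_n) 0 a = (a == j)%:R.
Proof. by rewrite !mxE eqxx. Qed.

Lemma key (R : realFieldType) n (A : 'M[R]_n) (hA : PD A) (S T : {set 'I_n}) i :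
  i \in S -> i \notin T ->
  pmx A S * pmx A T <= 2 * 2 ^+ size (index_enum 'I_n) *
   (pmx A (S :\ i) * pmx A (i |: T) +
    \sum_(j | j \in T :\: S) pmx A (j |: (S :\ i)) * pmx A (i |: (T :\ j))).
Proof.
move=> iS iT.
set S' := S :\ i.
have iS' : i \notin S' by rewrite finset.setD11.
have eS : S = i |: S' by rewrite finset.setD1K.
set ei : 'rV[R]_n := 'e_i.
set pT := proj A T ei. set r := ei - pT.
set J := T :\: S.
set c := fun j => pT 0 j.
set q := fun j : 'I_n => proj A S' 'e_j.
set Qf := fun u => Bf A u u.
set K : R := 2 ^+ size (index_enum 'I_n).
have hS : pmx A S = Qf (ei - proj A S' ei) * pmx A S' by rewrite eS P2'.
have hT : pmx A (i |: T) = Qf r * pmx A T by rewrite P2'.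
have hJ1 : forall j, j \in J -> pmx A (j |: S') = Qf ('e_j - q j) * pmx A S'.
  move=> j; rewrite inE => /andP [jS jT]; rewrite P2' // finset.in_setD1 negb_and (negPf jS) orbT //.
have hJ2 : forall j, j \in J ->
    pmx A T = Qf ('e_j - proj A (T :\ j) 'e_j) * pmx A (T :\ j).
  by move=> j; rewrite inE => /andP [_ jT]; rewrite -{1}(finset.setD1K jT) P2' // finset.setD11.
have hJ3 : forall j, j \in J ->
    pmx A (i |: (T :\ j)) = Qf (ei - proj A (T :\ j) ei) * pmx A (T :\ j).
  by move=> j _; rewrite P2' // finset.in_setD1 (negPf iT) andbF.
have sT : supp T pT by apply: proj_supp.
have oT : forall b, b \in T -> (r *m A) 0 b = 0 by apply: proj_orth.
have sq : forall j, supp S' (q j) by move=> j; apply: proj_supp.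
clearbody pT q.
set v := pT *m Pm R S' + \sum_(j | j \in J) c j *: q j.
have sv : supp S' v.
  move=> a aS; rewrite /v [(pT *m _ + _) 0 a]mxE summxE big1 ?addr0.
    by rewrite /Pm mul_mx_diag mxE mxE (negPf aS) mulr0.
  by move=> j _; rewrite [(c j *: q j) 0 a]mxE sq // mulr0.
have dec : pT = pT *m Pm R S' + \sum_(j | j \in J) c j *: 'e_j.
  apply/matrixP => a b; rewrite (ord1 a) {a} [(pT *m _ + _) 0 b]mxE summxE.
  rewrite /Pm mul_mx_diag mxE mxE.
  have -> : \sum_(j | j \in J) (c j *: 'e_j : 'rV[R]_n) 0 b = (b \in J)%:R * c b.
    case bJ : (b \in J).
      rewrite (bigD1 b) //= big1 ?addr0 => [|j /andP [_ jb]].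
        by rewrite mxE mxE !eqxx mulr1 mul1r.
      by rewrite mxE mxE eq_sym (negPf jb) mulr0.
    rewrite big1 ?mul0r // => j jJ; rewrite mxE mxE.
    rewrite eqxx /=; case: (eqVneq b j) => [E|]; rewrite ?mulr0 //.
    by rewrite E jJ in bJ.
  rewrite /c /=; case bT : (b \in T); last by rewrite sT ?bT // !mul0r mulr0 add0r.
  have bi : b != i by apply: contraTneq bT => ->.
  rewrite /J /S' finset.in_setD1 bi inE bT andbT /=.
  by case: (b \in S); rewrite /= ?mulr1 ?mulr0 ?mul1r ?mul0r ?addr0 ?add0r.
have ev : ei - v = r + \sum_(j | j \in J) c j *: ('e_j - q j).
  rewrite /r /v {2}dec.
  have -> : \sum_(j | j \in J) c j *: ('e_j - q j) =
     \sum_(j | j \in J) c j *: 'e_j - \sum_(j | j \in J) c j *: q j.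
    by rewrite -sumrB; apply: eq_bigr => j _; rewrite scalerBr.
  by rewrite !opprD !addrA subrK.
have g1 : Qf (ei - proj A S' ei) <= Qf (ei - v) by apply: proj_min.
have Q0 : forall u, 0 <= Qf u by move=> u; apply: Qge0.
have g2 : Qf (ei - v) <= 2 * Qf r +
    2 * (K * \sum_(j | j \in J) c j ^+ 2 * Qf ('e_j - q j)).
  rewrite ev; apply: le_trans (Qle2 hA _ _) _; rewrite lerD2l ler_pM2l //.
  apply: le_trans (Qsum hA _ _ _) _; rewrite ler_pM2l ?exprn_gt0 //.
  by rewrite le_eqVlt; apply/orP; left; apply/eqP/eq_bigr => j _; rewrite /Qf (QZ hA.1).
have g3 : forall j, j \in J -> c j ^+ 2 * pmx A T <= pmx A (i |: (T :\ j)).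
  move=> j jJ; rewrite (hJ2 j jJ) (hJ3 j jJ) mulrA ler_pM2r ?pmx_pos //.
  have jT : j \in T by move: jJ; rewrite inE => /andP [].
  have jTj : j \notin T :\ j by rewrite finset.setD11.
  set z := proj A (T :\ j) ei. set w := proj A (T :\ j) 'e_j.
  have sz : supp (T :\ j) z by apply: proj_supp.
  have hw : forall v', supp (T :\ j) v' -> Qf ('e_j - w) <= Qf ('e_j - v').
    by move=> v' hv'; apply: proj_min.
  clearbody z w.
  set u := pT - z.
  have eu : ei - z = r + u by rewrite /r /u addrA subrK.
  have su : supp T u.
    move=> a aT; rewrite rvB sT // sz ?subrr //.
    by rewrite finset.in_setD1 (negPf aT) andbF.
  have Qu : Qf u <= Qf (ei - z).
    rewrite eu /Qf (Qexp hA.1) (orth oT su) mulr0 addr0.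
    by have := Q0 r; rewrite /Qf; lra.
  case: (eqVneq (c j) 0) => [c0|c0].
    by rewrite c0 expr0n mul0r Q0.
  set v' := 'e_j - (c j)^-1 *: u.
  have sv' : supp (T :\ j) v'.
    move=> a; rewrite finset.in_setD1 negb_and negbK => /orP [/eqP ->|aT].
      by rewrite rvB rvZ rvB sz // subr0 rve eqxx mulVf // subrr.
    have aj : a != j by apply: contraNneq aT => ->.
    by rewrite rvB rvZ su // mulr0 subr0 rve (negPf aj).
  have := hw v' sv'.
  have -> : 'e_j - v' = (c j)^-1 *: u by rewrite /v' opprB addrC subrK.
  rewrite /Qf (QZ hA.1) => h.
  apply: le_trans Qu; rewrite -/(Qf u).
  have c2 : 0 <= c j ^+ 2 by rewrite sqr_ge0.
  apply: le_trans (ler_wpM2l c2 h) _.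
  by rewrite mulrA -exprMn mulfV // expr1n mul1r.
have a0 := pmx_pos hA S'. have b0 := pmx_pos hA T.
have K1 : 1 <= K by rewrite exprn_ege1 // ler1n.
set Sg := \sum_(j | j \in J) c j ^+ 2 * Qf ('e_j - q j).
set SP := \sum_(j | j \in J) pmx A (j |: S') * pmx A (i |: (T :\ j)).
have Hsum : Sg * (pmx A S' * pmx A T) <= SP.
  rewrite /Sg mulr_suml; apply: ler_sum => j jJ; rewrite hJ1 //.
  have -> : c j ^+ 2 * Qf ('e_j - q j) * (pmx A S' * pmx A T) =
     (Qf ('e_j - q j) * pmx A S') * (c j ^+ 2 * pmx A T) by ring.
  by rewrite ler_wpM2l ?g3 // mulr_ge0 // ltW.
rewrite hS hT.
have ab0 : 0 < pmx A S' * pmx A T by apply: mulr_gt0.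
have f1 := ler_wpM2r (ltW ab0) (le_trans g1 g2).
have hh : 0 <= (K - 1) * (Qf r * (pmx A S' * pmx A T)).
  by apply: mulr_ge0; [rewrite subr_ge0 | apply: mulr_ge0 => //; apply: ltW].
have hK : 0 <= K by lra.
have HK : K * (Sg * (pmx A S' * pmx A T)) <= K * SP by rewrite ler_wpM2l.
move: f1 hh HK; set ab := pmx A S' * pmx A T.
have -> : Qf (ei - proj A S' ei) * pmx A S' * pmx A T = Qf (ei - proj A S' ei) * ab by rewrite /ab mulrA.
have -> : pmx A S' * (Qf r * pmx A T) = Qf r * ab by rewrite /ab; ring.
move=> f1 hh HK; rewrite -/Sg in f1; nra.
Qed.

Lemma key2 (R : realFieldType) n (A : 'M[R]_n) (hA : PD A) (S T : {set 'I_n}) i :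
  i \in S :\: T ->
  let C := 2 * 2 ^+ size (index_enum 'I_n) * (n.+1)%:R in
  ~ (C * (pmx A (S :\ i) * pmx A (i |: T)) < pmx A S * pmx A T /\
     forall j, j \in T :\: S ->
       C * (pmx A (j |: (S :\ i)) * pmx A (i |: (T :\ j))) < pmx A S * pmx A T).
Proof.
rewrite inE => /andP [iT iS] C [h0 hj].
have := key hA iS iT.
set K2 := 2 * 2 ^+ size (index_enum 'I_n).
set L := pmx A S * pmx A T.
have L0 : 0 < L by apply: mulr_gt0; apply: pmx_pos.
have K20 : 0 < K2 by rewrite mulr_gt0 // exprn_gt0.
set SP := \sum_(j | j \in T :\: S) pmx A (j |: (S :\ i)) * pmx A (i |: (T :\ j)).
have hS : C * SP <= L * n%:R.
  rewrite /SP mulr_sumr.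
  apply: le_trans (_ : \sum_(j | j \in T :\: S) L <= _).
    by apply: ler_sum => j jJ; apply/ltW/hj.
  rewrite sumr_const -[L *+ _]mulr_natr ler_wpM2l ?(ltW L0) // ler_nat.
  by apply: leq_trans (max_card _) _; rewrite card_ord.
move=> hk.
have := ler_wpM2l (ler0n _ n.+1) hk.
move: h0 hS; rewrite /C -/K2; set N := (n.+1)%:R; set t0 := pmx A (S :\ i) * pmx A (i |: T).
have -> : (n%:R : R) = N - 1 by rewrite /N -addn1 natrD addrK.
move=> h0 hS h.
rewrite -/L in h0; nra.
Qed.

Local Open Scope classical_set_scope.

Lemma ev_opt (R : realType) (I : Type) (t : R^nat) (x : nat -> I -> R) (y : I -> R)
  (tinf : t @ \oo --> +oo%R) (xpos : forall k X, 0 < x k X)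
  (cv : forall X, ((fun k => logb (t k) (x k X)) : R^nat) @ \oo --> (y X : R))
  (S T U V : I) (M : R) :
  y U + y V < y S + y T -> \forall k \near \oo, M * (x k U * x k V) < x k S * x k T.
Proof.
move=> gap; set g := y S + y T - (y U + y V).
have g0 : 0 < g by rewrite subr_gt0.
set d := fun k => (logb (t k) (x k S) + logb (t k) (x k T)) -
                  (logb (t k) (x k U) + logb (t k) (x k V)).
have cd : d @ \oo --> g.
  by apply: cvgB; apply: cvgD; apply: cv.
have E1 : \forall k \near \oo, `|g - d k| < g / 2.
  by apply: (cvgr_dist_lt _ _ cd _ (divr_gt0 g0 (ltr0n R 2))).
case: (lerP M 0) => hM.
  apply: nearW => k; apply: (le_lt_trans (y := 0)); last by rewrite mulr_gt0.
  by rewrite mulr_le0_ge0 // ltW // mulr_gt0.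
have E2 : \forall k \near \oo, Num.max 1 (expR (2 * ln M / g)) < t k.
  by apply: (cvgry_gt tinf).
near=> k.
have hd : g / 2 < d k.
  have : `|g - d k| < g / 2 by near: k.
  rewrite ltr_norml; lra.
have : Num.max 1 (expR (2 * ln M / g)) < t k by near: k.
rewrite gt_max => /andP [t1 t2].
have tk0 : 0 < t k by apply: lt_trans t1.
set lt := ln (t k).
have lt0 : 0 < lt by apply: ln_gt0.
have lt2 : 2 * ln M / g < lt.
  by rewrite -(expRK (2 * ln M / g)) /lt ltr_ln ?posrE ?expR_gt0.
have p1 : 0 < (d k - g / 2) * lt by rewrite mulr_gt0 // subr_gt0.
move: lt2; rewrite ltr_pdivrMr // => lt2.
have prod : ln M < d k * lt by lra.
have hx X : x k X \in Num.pos by rewrite posrE.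
have e2 : d k * lt = ln (x k S) + ln (x k T) - (ln (x k U) + ln (x k V)).
  rewrite /d /logb /= -/lt; field; by rewrite gt_eqF.
rewrite -ltr_ln ?posrE ?mulr_gt0 //.
rewrite !lnM ?posrE ?mulr_gt0 //; lra.
Unshelve. all: by end_near.
Qed.

Definition pmC (R : realType) n : R := 2 * 2 ^+ size (index_enum 'I_n) * (n.+1)%:R.

Lemma alg_pos (R : realType) n (A : 'M[R]_n) : posdef A -> forall X, 0 < principal_minor A X.
Proof. by move=> pA X; rewrite pm_MX; exact: (pmx_pos (pA : PD A)). Qed.

Lemma alg_key2 (R : realType) n (A : 'M[R]_n) : posdef A -> forall (S T : {set 'I_n}) i,
  i \in S :\: T ->
  ~ (pmC R n * (principal_minor A (S :\ i) * principal_minor A (i |: T)) <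
       principal_minor A S * principal_minor A T /\
     forall j, j \in T :\: S ->
       pmC R n * (principal_minor A (j |: (S :\ i)) * principal_minor A (i |: (T :\ j)))
         < principal_minor A S * principal_minor A T).
Proof.
move=> pA S T i iST [h0 hj]; apply: (key2 (pA : PD A) iST); split.
  by rewrite /pmx -!pm_MX.
by move=> j jJ; rewrite /pmx -!pm_MX; apply: hj.
Qed.

Theorem proposition2p1 (R : realType) (n : nat) :
  trop (@PMplus R n) `<=` [set F | Mnat_concave F].
Proof.
move=> F [t [x [tinf [PMx cvF]]]] S T i iST.
have xpos : forall k X, 0 < x k X.
  by move=> k X; case: (PMx k) => A [pA ->]; apply: alg_pos.
case: (boolP (F S + F T <= F (S :\ i) + F (i |: T))) => h0; first by left.
right; case: (pselect (exists2 j : 'I_n, j \in T :\: S &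
   F S + F T <= F (j |: (S :\ i)) + F (i |: (T :\ j)))) => // nex; exfalso.
have hj : forall j, j \in T :\: S -> F (j |: (S :\ i)) + F (i |: (T :\ j)) < F S + F T.
  by move=> j jJ; rewrite ltNge; apply/negP => hle; apply: nex; exists j.
rewrite -ltNge in h0.
have E0 := ev_opt tinf xpos cvF (pmC R n) h0.
have Ej : \forall k \near \oo, forall j, j \in T :\: S ->
    pmC R n * (x k (j |: (S :\ i)) * x k (i |: (T :\ j))) < x k S * x k T.
  apply: filter_forall => j; case jJ : (j \in T :\: S).
    by apply: filterS (ev_opt tinf xpos cvF (pmC R n) (hj j jJ)) => k h _.
  by apply: nearW => k.
have Hf : \forall k \near \oo, False.
  near=> k.
  have h0k : pmC R n * (x k (S :\ i) * x k (i |: T)) < x k S * x k T by near: k.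
  have hjk : forall j, j \in T :\: S ->
    pmC R n * (x k (j |: (S :\ i)) * x k (i |: (T :\ j))) < x k S * x k T by near: k.
  case: (PMx k) => A [pA xkA]; rewrite xkA in h0k hjk.
  by apply: (alg_key2 pA iST); split.
by have [] := filter_ex Hf.
Unshelve. all: by end_near.
Qed.
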